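(* Let $k\ge5$ and $H=P_k$, the path on $k$ vertices. Then for every $p\in[0,1)$ there is no deterministic algorithm solving the Delayed $H$-Node-Deletion Problem with predictions that has both consistency less than $k-p(k-1)$ and robustness less than $k+\frac{p}{1-p}$.
   Context: All graphs are finite, simple and undirected. An induced copy of $H$ in $G$ is an induced subgraph isomorphic to $H$; $G$ is $H$-free if it has none. An online graph $G$ has vertices $v_1,\dots,v_n$ revealed one at a time; $G_t=G[\{v_1,\dots,v_t\}]$. Delayed $H$-Node-Deletion Problem with predictions: when $v_t$ is revealed the algorithm receives a bit $u_t(G)\in\{0,1\}$; it must choose sets $S_1\subseteq\dots\subseteq S_n$ with $S_t\subseteq V(G_t)$ and $G_t-S_t$ $H$-free for each $t$, where $S_t$ depends only on $G_t$ and $u_1(G),\dots,u_t(G)$; the cost is $|S_n|$. $\mathrm{OPT}(G)$ is the minimum size of $S\subseteq V(G)$ with $G-S$ $H$-free. The advice is correct if the set of vertices with bit $1$ is a minimum-size such set. An algorithm is $(r,w)$-competitive if there is a constant $\alpha\ge0$ such that for every online graph $G$: for some correct advice its cost is at most $r\cdot\mathrm{OPT}(G)+\alpha$, and for every advice (correct or not) its cost is at most $w\cdot\mathrm{OPT}(G)+\alpha$. Consistency (resp. robustness) is the infimum of such $r$ (resp. $w$). *)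

(* Defs.v *)
From Stdlib Require Export Reals.
From mathcomp Require Export all_boot.
Set Implicit Arguments.
Unset Strict Implicit.
Unset Printing Implicit Defensive.

Definition path_adj (k : nat) (i j : 'I_k) : bool :=
  (i.+1 == j :> nat) || (j.+1 == i :> nat).

(* G - S is P_k-free: there is no injective f : 'I_k -> V(G) avoiding S
   such that f is an induced embedding of P_k (adjacency AND non-adjacency
   preserved), i.e. no induced copy of P_k in G - S. *)
Definition Pk_freeb (k : nat) (T : finType) (e : rel T) (S : {set T}) : bool :=
  ~~ [exists f : {ffun 'I_k -> T},
        [&& injectiveb f,
            [forall i, f i \notin S] &
            [forall i, forall j, e (f i) (f j) == path_adj i j]]].

(* An online graph is given by an adjacency relation e on nat (symmetric,
   irreflexive) and a number n of vertices; v_{t+1} is the nat t. *)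
Definition restr (e : rel nat) (t : nat) : rel 'I_t := fun i j => e i j.
Arguments restr e t : clear implicits.

Definition OPT (k n : nat) (e : rel nat) : nat :=
  \big[minn/n]_(S : {set 'I_n} | Pk_freeb k (restr e n) S) #|S|.

(* A deterministic online algorithm: at time t it sees exactly G_t (as a
   finite adjacency table on 'I_t) and the bits u_1..u_t, and outputs S_t. *)
Definition online_alg :=
  forall t : nat, {ffun 'I_t -> {ffun 'I_t -> bool}} -> {ffun 'I_t -> bool} ->
    {set 'I_t}.

Definition Gt (e : rel nat) (t : nat) : {ffun 'I_t -> {ffun 'I_t -> bool}} :=
  [ffun i : 'I_t => [ffun j : 'I_t => e i j]].
Definition ut (u : nat -> bool) (t : nat) : {ffun 'I_t -> bool} :=
  [ffun i : 'I_t => u i].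

Definition St (A : online_alg) (e : rel nat) (u : nat -> bool) (t : nat)
  : {set 'I_t} := A t (Gt e t) (ut u t).

Definition inSt (A : online_alg) (e : rel nat) (u : nat -> bool) (t x : nat)
  : bool := [exists i in St A e u t, val i == x].

Definition valid_alg (k : nat) (A : online_alg) : Prop :=
  forall (e : rel nat), symmetric e -> irreflexive e ->
  forall (u : nat -> bool) (t : nat),
    Pk_freeb k (restr e t) (St A e u t) /\
    (forall x, inSt A e u t x -> inSt A e u t.+1 x).

Definition cost (A : online_alg) (e : rel nat) (u : nat -> bool) (n : nat) : nat :=
  #|St A e u n|.

Definition correct_advice (k n : nat) (e : rel nat) (u : nat -> bool) : bool :=
  let S := [set i : 'I_n | u i] in
  Pk_freeb k (restr e n) S && (#|S| == OPT k n e).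

Definition competitive (k : nat) (A : online_alg) (r w : R) : Prop :=
  exists alpha : R, Rle 0 alpha /\
  forall (n : nat) (e : rel nat), symmetric e -> irreflexive e ->
    (exists u : nat -> bool, correct_advice k n e u /\
        Rle (INR (cost A e u n)) (Rplus (Rmult r (INR (OPT k n e))) alpha)) /\
    (forall u : nat -> bool,
        Rle (INR (cost A e u n)) (Rplus (Rmult w (INR (OPT k n e))) alpha)).

(* consistency < a  (inf of admissible r is < a)  and
   robustness  < b  (inf of admissible w is < b) *)
Definition consistency_lt (k : nat) (A : online_alg) (a : R) : Prop :=
  exists r w : R, Rlt r a /\ competitive k A r w.
Definition robustness_lt (k : nat) (A : online_alg) (b : R) : Prop :=
  exists r w : R, Rlt w b /\ competitive k A r w.

(* Main.v *)
Require Import Defs.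
From mathcomp Require Import zify.
From Stdlib Require Import Lra.
Definition padj (a b : nat) : bool := (a.+1 == b) || (b.+1 == a).
Definition pe (posf : nat -> nat) : rel nat := fun x y => padj (posf x) (posf y).

Lemma P1 k n posf (S : {set 'I_n}) :
  Pk_freeb k (restr (pe posf) n) S ->
  exists i : 'I_k, forall j : 'I_n, posf j = i -> j \in S.
Proof.
move=> HS.
case: (boolP [exists i : 'I_k, [forall j : 'I_n, (posf j == i) ==> (j \in S)]]).
  move=> /existsP [i /forallP Hi]; exists i => j Hj; by move: (Hi j); rewrite Hj eqxx.
rewrite negb_exists => /forallP H.
have ex (i : 'I_k) : exists j : 'I_n, (posf j == i) && (j \notin S).
  move: (H i); rewrite negb_forall => /existsP [j]; rewrite negb_imply => Hj; by exists j.
exfalso; move/negP: HS; apply; apply/existsP.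
exists [ffun i => xchoose (ex i)].
have Hf i : (posf (xchoose (ex i)) == i) && (xchoose (ex i) \notin S) := xchooseP (ex i).
apply/and3P; split.
- apply/injectiveP => a b; rewrite !ffunE => E.
  move: (Hf a) (Hf b) => /andP [/eqP Ha _] /andP [/eqP Hb _].
  apply: ord_inj; by rewrite -Ha -Hb E.
- apply/forallP => i; rewrite ffunE; by case/andP: (Hf i).
- apply/forallP => i; apply/forallP => j; rewrite !ffunE /restr /pe.
  move: (Hf i) (Hf j) => /andP [/eqP -> _] /andP [/eqP -> _]; by [].
Qed.

Lemma path_surj k (g : nat -> nat) : 4 <= k -> (forall a, a < k -> g a < k) ->
  (forall a b, a < k -> b < k -> padj (g a) (g b) = padj a b) ->
  forall i, i < k -> exists2 a, a < k & g a = i.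
Proof.
move=> hk hg hp.
have adj t : t.+1 < k -> (g t).+1 = g t.+1 \/ (g t.+1).+1 = g t.
  move=> ht; have := hp t t.+1 (ltnW ht) ht; rewrite /padj eqxx /= => /orP [/eqP|/eqP]; auto.
have nadj a b : a < k -> b < k -> a.+1 < b -> (g a).+1 <> g b /\ (g b).+1 <> g a.
  move=> ha hb hab; have := hp a b ha hb; rewrite /padj.
  have -> : (a.+1 == b) = false by apply/eqP; lia.
  have -> : (b.+1 == a) = false by apply/eqP; lia.
  move=> /norP [/eqP h1 /eqP h2]; by split.
have step t : 1 <= t -> t.+1 < k -> g t.+1 + g t.-1 = 2 * g t.
  move=> h1 h2.
  have A1 := adj t h2. have A0 := adj t.-1 (ltac:(lia)).
  have E : t.-1.+1 = t by lia. rewrite E in A0.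
  have NT : g t.+1 <> g t.-1.
    move=> Heq.
    case: (ltnP t.+2 k) => h3.
    + have A2 := adj t.+1 h3. have [N1 N2] := nadj t.-1 t.+2 ltac:(lia) h3 ltac:(lia).
      lia.
    + have A3 := adj t.-2 ltac:(lia). have E2 : t.-2.+1 = t.-1 by lia. rewrite E2 in A3.
      have [N1 N2] := nadj t.-2 t.+1 ltac:(lia) h2 ltac:(lia). lia.
  lia.
move=> i hi.
have hk1 : k.-1 < k by lia.
case: (adj 0 ltac:(lia)) => H01.
- have up t : t.+1 < k -> g t = g 0 + t /\ g t.+1 = g 0 + t.+1.
    elim: t => [|t IH] ht; first lia.
    have [IH1 IH2] := IH ltac:(lia).
    have := step t.+1 ltac:(lia) ht. rewrite /=. lia.
  have [U1 U2] := up k.-2 ltac:(lia).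
  have E : k.-2.+1 = k.-1 by lia. rewrite E in U2.
  have := hg k.-1 hk1. move=> hb.
  exists i => //. case: i hi => [|i] hi; first lia.
  have [_ U] := up i ltac:(lia). lia.
- have dn t : t.+1 < k -> g t + t = g 0 /\ g t.+1 + t.+1 = g 0.
    elim: t => [|t IH] ht; first lia.
    have [IH1 IH2] := IH ltac:(lia).
    have := step t.+1 ltac:(lia) ht. rewrite /=. lia.
  have [U1 U2] := dn k.-2 ltac:(lia).
  have E : k.-2.+1 = k.-1 by lia. rewrite E in U2.
  have := hg 0 ltac:(lia). move=> hb.
  exists (k.-1 - i); first lia.
  case E2: (k.-1 - i) => [|m]; first lia.
  have [_ U] := dn m ltac:(lia). lia.
Qed.

Lemma P2 k n (posf : nat -> nat) (i : nat) : 4 <= k -> (forall x : 'I_n, posf x < k) -> i < k ->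
  Pk_freeb k (restr (pe posf) n) [set x : 'I_n | posf x == i].
Proof.
case: k => [//|k] hk hpos hi; apply/negP => /existsP [f /and3P [_ /forallP hS /forallP hadj]].
pose g a := posf (f (inord a)).
have hg a : a < k.+1 -> g a < k.+1 by move=> _; rewrite /g; apply: hpos.
have hp a b : a < k.+1 -> b < k.+1 -> padj (g a) (g b) = padj a b.
  move=> ha hb; have := hadj (inord a); move=> /forallP /(_ (inord b)) /eqP.
  by rewrite /restr /pe /path_adj !inordK.
have [a ha ga] := @path_surj k.+1 g hk hg hp i hi.
by move: (hS (inord a)); rewrite inE -/(g a) ga eqxx.
Qed.
Lemma bigmin_seq (T : eqType) (r : seq T) (P : pred T) (F : T -> nat) (d : nat) (x : T) :
  x \in r -> P x -> \big[minn/d]_(s <- r | P s) F s <= F x.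
Proof.
elim: r => // a r IH; rewrite inE big_cons => /orP [/eqP -> Px | xr Px].
  by rewrite Px geq_minl.
case: (P a); last exact: IH.
by apply: leq_trans (geq_minr _ _) (IH xr Px).
Qed.
Lemma OPT_le k n e (S : {set 'I_n}) : Pk_freeb k (restr e n) S -> OPT k n e <= #|S|.
Proof.
move=> HS; rewrite /OPT.
exact: (@bigmin_seq _ _ (fun S : {set 'I_n} => Pk_freeb k (restr e n) S) (fun S => #|S|) n S (mem_index_enum S)).
Qed.

Definition eS (s : seq nat) : rel nat := pe (fun x => nth 0 s x).
Definition uS (s : seq nat) : nat -> bool := fun x => nth 0 s x == 0.
Definition nextpos (A : online_alg) (k t : nat) (s : seq nat) : nat :=
  if t < k then t else
  match [pick i : 'I_k | [forall j : 'I_t, (nth 0 s j == i) ==> (j \in A t (Gt (eS s) t) (ut (uS s) t))]] with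
  | Some i => val i | None => 0 end.
Fixpoint posseq (A : online_alg) (k t : nat) : seq nat :=
  match t with 0 => [::] | t'.+1 => rcons (posseq A k t') (nextpos A k t' (posseq A k t')) end.
Definition pos A k x := nth 0 (posseq A k x.+1) x.
Definition posC A k n1 x := if x < n1 then pos A k x else ((x - n1) %% k.-1).+1.
Definition eC A k n1 := pe (posC A k n1).
Definition uC A k n1 x := posC A k n1 x == 0.

Lemma size_posseq A k t : size (posseq A k t) = t.
Proof. by elim: t => //= t IH; rewrite size_rcons IH. Qed.

Lemma nth_posseq A k t x : x < t -> nth 0 (posseq A k t) x = pos A k x.
Proof.
elim: t => // t IH hx /=; rewrite nth_rcons size_posseq.
case: (ltnP x t) => h; first by rewrite IH.
have -> : x = t by lia. by rewrite eqxx /pos /= nth_rcons size_posseq ltnn eqxx.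
Qed.

Lemma pos_eq A k x : pos A k x = nextpos A k x (posseq A k x).
Proof. by rewrite /pos /= nth_rcons size_posseq ltnn eqxx. Qed.

Lemma pos_lt A k x : 0 < k -> pos A k x < k.
Proof.
move=> hk; rewrite pos_eq /nextpos; case: ifP => // _.
have H (o : option 'I_k) : (match o with Some i => val i | None => 0 end) < k by case: o => [i|//]; exact: ltn_ord.
exact: H.
Qed.

Lemma pos_small A k x : x < k -> pos A k x = x.
Proof. by move=> hx; rewrite pos_eq /nextpos hx. Qed.

Lemma posC_lt A k n1 x : 1 < k -> posC A k n1 x < k.
Proof.
move=> hk; rewrite /posC; case: ifP => _; first by apply: pos_lt; lia.
have := @ltn_pmod (x - n1) k.-1 ltac:(lia). lia.
Qed.

Lemma padj_sym : symmetric padj.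
Proof. by move=> a b; rewrite /padj orbC. Qed.
Lemma pe_sym f : symmetric (pe f).
Proof. by move=> a b; rewrite /pe padj_sym. Qed.
Lemma pe_irr f : irreflexive (pe f).
Proof. by move=> a; rewrite /pe /padj; apply/norP; split; apply/eqP; lia. Qed.

Lemma Gt_eq A k n1 t : t <= n1 -> Gt (eS (posseq A k t)) t = Gt (eC A k n1) t.
Proof.
move=> ht; apply/ffunP => i; rewrite !ffunE; apply/ffunP => j; rewrite !ffunE.
by rewrite /eS /eC /pe /posC !nth_posseq // (leq_trans (ltn_ord i) ht) (leq_trans (ltn_ord j) ht).
Qed.
Lemma ut_eq A k n1 t : t <= n1 -> ut (uS (posseq A k t)) t = ut (uC A k n1) t.
Proof.
move=> ht; apply/ffunP => i; rewrite !ffunE.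
by rewrite /uS /uC /posC !nth_posseq // (leq_trans (ltn_ord i) ht).
Qed.

Lemma inSt_mono A k e u t1 t2 x : valid_alg k A -> symmetric e -> irreflexive e ->
  t1 <= t2 -> inSt A e u t1 x -> inSt A e u t2 x.
Proof.
move=> hv hs hi; elim: t2 => [|t2 IH] h12.
  by have -> : t1 = 0 by lia.
case: (ltnP t1 t2.+1) => h; last by have -> : t1 = t2.+1 by lia.
move=> H; have := IH ltac:(lia) H; exact: (proj2 (hv e hs hi u t2) x).
Qed.

Lemma key A k n1 t : 1 < k -> valid_alg k A -> k <= t -> t <= n1 ->
  forall m : 'I_t, pos A k m = pos A k t -> m \in St A (eC A k n1) (uC A k n1) t.
Proof.
move=> hk hv hkt htn m.
rewrite [pos A k t]pos_eq /nextpos ltnNge hkt /= /St -Gt_eq // -ut_eq //.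
case: pickP => [i /forallP Hi|none].
  move=> E; move: (Hi m); by rewrite (@nth_posseq A k t m (ltn_ord m)) E eqxx.
exfalso.
have [Hf _] := hv (eC A k n1) (pe_sym _) (pe_irr _) (uC A k n1) t.
have [i Hi] := @P1 k t (posC A k n1) _ Hf.
move: (none i) => /negP; apply; apply/forallP => j; apply/implyP => /eqP Ej.
rewrite /St -Gt_eq // -ut_eq // in Hi; apply: Hi.
by rewrite /posC (leq_trans (ltn_ord j) htn) -(@nth_posseq A k t j (ltn_ord j)).
Qed.

Lemma inSt_mem A e u t (i : 'I_t) : inSt A e u t i = (i \in St A e u t).
Proof.
apply/existsP/idP => [[i' /andP [H /eqP E]]|H]; last by exists i; rewrite H eqxx.
by have <- : i' = i by apply: ord_inj.
Qed.

Lemma L7 A k n1 j j' : 1 < k -> valid_alg k A -> j < j' -> j' < n1 ->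
  pos A k j = pos A k j' -> inSt A (eC A k n1) (uC A k n1) n1 j.
Proof.
move=> hk hv hjj hj' E.
case: (ltnP j' k) => hkj.
  by move: E; rewrite !pos_small //; [lia| lia].
apply: (@inSt_mono A k _ _ j') => //; [exact: pe_sym|exact: pe_irr|lia|].
have := @key A k n1 j' hk hv hkj (ltnW hj') (Ordinal hjj) E.
move=> H; move: (inSt_mem A (eC A k n1) (uC A k n1) j' (Ordinal hjj)); rewrite /= => ->; exact: H.
Qed.

Lemma L8 A k n1 : 1 < k -> valid_alg k A -> n1 - k <= #|St A (eC A k n1) (uC A k n1) n1|.
Proof.
move=> hk hv; set S := St _ _ _ _.
have C := cardC S. rewrite card_ord in C.
suff : #|[predC S]| <= k by lia.
have := @leq_card_in _ _ (fun x : 'I_n1 => Ordinal (posC_lt A k n1 x hk)) [predC S].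
rewrite card_ord; apply => x y; rewrite !inE => hx hy [] E.
rewrite /posC !ltn_ord in E.
apply: ord_inj; case: (ltngtP x y) => // h; exfalso.
- have := @L7 A k n1 _ _ hk hv h (ltn_ord y) E; rewrite (inSt_mem _ _ _ _ x); by apply/negP.
- have := @L7 A k n1 _ _ hk hv h (ltn_ord x) (esym E); rewrite (inSt_mem _ _ _ _ y); by apply/negP.
Qed.

Lemma L9 A k e u t1 t2 : valid_alg k A -> symmetric e -> irreflexive e -> t1 <= t2 ->
  #|St A e u t1| <= #|St A e u t2|.
Proof.
move=> hv hs hi h.
have inj : injective (widen_ord h).
  by move=> x y /(congr1 val) /= E; apply: ord_inj.
rewrite -(card_imset _ inj); apply: subset_leq_card; apply/subsetP => y /imsetP [x Hx ->].
rewrite -inSt_mem /=; apply: (@inSt_mono A k _ _ t1) => //.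
by rewrite (inSt_mem _ _ _ _ x).
Qed.

Lemma L10 A k n1 n (i : nat) : 4 <= k -> i < k ->
  OPT k n (eC A k n1) <= #|[set x : 'I_n | posC A k n1 x == i]|.
Proof.
move=> hk hi; apply: OPT_le.
apply: (@P2 k n (posC A k n1) i hk _ hi) => x; apply: posC_lt; lia.
Qed.

Lemma L11 A k n1 n : 1 < k ->
  \sum_(i < k) #|[set x : 'I_n | posC A k n1 x == i]| = n.
Proof.
move=> hk.
rewrite (eq_bigr (fun i : 'I_k => \sum_(x : 'I_n) ((posC A k n1 x == i) : nat))); last first.
  move=> i _; rewrite -sum1dep_card big_mkcond; apply: eq_bigr => x _; by case: (_ == _).
rewrite exchange_big /=.
rewrite (eq_bigr (fun _ => 1)) => [|x _]; first by rewrite sum_nat_const card_ord muln1.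
rewrite (bigD1 (Ordinal (posC_lt A k n1 x hk))) //= eqxx big1 //.
move=> i /negP Hi; case E: (_ == _) => //; exfalso; apply: Hi; apply/eqP; apply: ord_inj => /=.
by apply/eqP; rewrite eq_sym.
Qed.

Lemma L12 A k n1 n2 : n1 <= n2 ->
  #|[set x : 'I_n2 | posC A k n1 x == 0]| = #|[set x : 'I_n1 | posC A k n1 x == 0]|.
Proof.
move=> h.
have inj : injective (widen_ord h).
  by move=> x y /(congr1 val) /= E; apply: ord_inj.
suff -> : [set x : 'I_n2 | posC A k n1 x == 0] = widen_ord h @: [set x : 'I_n1 | posC A k n1 x == 0].
  exact: card_imset.
apply/setP => x; rewrite inE.
apply/idP/imsetP => [H|[y Hy ->]].
  have hx : x < n1.
    move: H; rewrite /posC; case: ifP => //.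
  exists (Ordinal hx); first by rewrite inE.
  by apply: ord_inj.
by move: Hy; rewrite inE.
Qed.

Lemma L13 A k n1 (j : nat) : 0 < j -> j < k ->
  n1 < #|[set x : 'I_(n1 + k.-1 * n1.+1) | posC A k n1 x == j]|.
Proof.
move=> hj hjk.
have bnd (a : 'I_n1.+1) : n1 + j.-1 + a * k.-1 < n1 + k.-1 * n1.+1.
  have := ltn_ord a; nia.
pose g (a : 'I_n1.+1) : 'I_(n1 + k.-1 * n1.+1) := Ordinal (bnd a).
have inj : injective g.
  move=> a b /(congr1 val) /= E; apply: ord_inj; nia.
suff S : [set g a | a in 'I_n1.+1] \subset [set x : 'I_(n1 + k.-1 * n1.+1) | posC A k n1 x == j].
  by have := subset_leq_card S; rewrite card_imset // card_ord.
apply/subsetP => y /imsetP [a _ ->]; rewrite inE /posC /=.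
have -> : (n1 + j.-1 + a * k.-1 < n1) = false by apply/negbTE; rewrite -leqNgt -addnA leq_addr.
rewrite -addnA addKn addnC.
rewrite modnMDl modn_small; last lia.
apply/eqP; lia.
Qed.

Lemma L14 A k n1 (u' : nat -> bool) : 4 <= k ->
  correct_advice k (n1 + k.-1 * n1.+1) (eC A k n1) u' ->
  forall x : 'I_(n1 + k.-1 * n1.+1), u' x = uC A k n1 x.
Proof.
move=> hk /andP [Hf /eqP Hc].
set n2 := n1 + k.-1 * n1.+1.
set S' := [set i : 'I_n2 | u' i].
set B0 := [set x : 'I_n2 | posC A k n1 x == 0].
have [j Hj] := @P1 k n2 (posC A k n1) _ Hf.
have HO := @L10 A k n1 n2 0 hk ltac:(lia).
have HB0 : #|B0| <= n1.
  rewrite /B0 L12; last by rewrite /n2 leq_addr.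
  by apply: leq_trans (max_card _) _; rewrite card_ord.
have Hsub : [set x : 'I_n2 | posC A k n1 x == j] \subset S'.
  by apply/subsetP => x; rewrite inE => /eqP /Hj.
have j0 : val j = 0.
  case: (posnP j) => // hj; exfalso.
  have := @L13 A k n1 j hj (ltn_ord j).
  have h1 := subset_leq_card Hsub. move=> h2.
  have h3 : #|S'| <= n1 by rewrite /S' Hc; apply: leq_trans HO HB0.
  have := leq_trans h2 (leq_trans h1 h3); by rewrite ltnn.
rewrite j0 in Hsub.
have E : B0 == S'.
  by rewrite eqEcard Hsub /= Hc.
move=> x; rewrite /uC.
by move/eqP/setP: E => /(_ x); rewrite !inE => <-.
Qed.

Lemma sumO A k n1 : 4 <= k ->
  #|[set x : 'I_n1 | posC A k n1 x == 0]| + k.-1 * OPT k n1 (eC A k n1) <= n1.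
Proof.
move=> hk.
apply: (@leq_trans (\sum_(i < k) #|[set x : 'I_n1 | posC A k n1 x == i]|)); last first.
  by rewrite (@L11 A k n1 n1 ltac:(lia)).
case: k hk => [//|k'] hk /=.
rewrite big_ord_recl /=; apply: leq_add => //.
rewrite -[X in X * _]card_ord -sum_nat_const; apply: leq_sum => i _.
apply: L10; [lia| rewrite /bump /=; exact: ltn_ord].
Qed.

Open Scope R_scope.
Lemma real_part (k p r1 w2 a1 a2 cM A0 Or : R) :
  (5 <= k) -> (0 <= p) -> (p < 1) ->
  (r1 < k - p * (k - 1)) -> (w2 < k + p / (1 - p)) ->
  (0 <= a1) -> (0 <= a2) -> (0 <= A0) -> (0 <= Or) ->
  (cM <= r1 * A0 + a1) -> (cM <= w2 * Or + a2) -> (A0 + (k - 1) * Or <= k + cM) ->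
  (cM <= Rmax r1 0 * ((a1 + (k - p * (k - 1) - 1) * a2 + (k - p * (k - 1)) * k) / ((k - p * (k - 1)) - r1)) + a1).
Proof.
move=> hk hp0 hp1 hr hw ha1 ha2 hA hO h1 h2 h3.
set r0 := (k - p * (k - 1)) in hr *.
set w0 := (k + p / (1 - p)) in hw.
have hr01 : (0 <= r0 - 1) by rewrite /r0; nra.
have key : ((r0 - 1) * w0 = (k - 1) * r0).
  rewrite /r0 /w0; field; lra.
have s1 : ((r0 - 1) * w2 * Or <= (k - 1) * r0 * Or).
  rewrite -key; apply: Rmult_le_compat_r => //; apply: Rmult_le_compat_l => //; lra.
have s2 : (r0 * cM <= r1 * A0 + (r0 - 1) * (w2 * Or + a2) + a1).
  have := Rmult_le_compat_l _ _ _ hr01 h2. nra.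
have s3 : ((r0 - r1) * A0 <= a1 + (r0 - 1) * a2 + r0 * k).
  have hr0 : (0 <= r0) by lra.
  have := Rmult_le_compat_l _ _ _ hr0 h3. nra.
have hpos : (0 < r0 - r1) by lra.
have s4 : (A0 <= (a1 + (r0 - 1) * a2 + r0 * k) / (r0 - r1)).
  apply: (Rmult_le_reg_l (r0 - r1)) => //. field_simplify; lra.
have s5 : (r1 * A0 <= Rmax r1 0 * A0).
  apply: Rmult_le_compat_r => //; apply: Rmax_l.
have s6 : (Rmax r1 0 * A0 <= Rmax r1 0 * ((a1 + (r0 - 1) * a2 + r0 * k) / (r0 - r1))).
  apply: Rmult_le_compat_l => //; apply: Rmax_r.
lra.
Qed.
Close Scope R_scope.

Theorem mainTheorem9 (k : nat) (p : R) :
  5 <= k -> Rle 0 p -> Rlt p 1 ->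
  forall A : online_alg, valid_alg k A ->
  ~ (consistency_lt k A (Rminus (INR k) (Rmult p (Rminus (INR k) 1))) /\
     robustness_lt k A (Rplus (INR k) (Rdiv p (Rminus 1 p)))).
Proof.
Open Scope R_scope.
move=> hk hp0 hp1 A hv [[r1 [w1 [hr1 [a1 [ha1 H1]]]]] [r2 [w2 [hw2 [a2 [ha2 H2]]]]]].
have [M HM] := INR_unbounded (Rmax r1 0 * ((a1 + (INR k - p * (INR k - 1) - 1) * a2 + (INR k - p * (INR k - 1)) * INR k) / ((INR k - p * (INR k - 1)) - r1)) + a1).
set n1 := (k + M)%N.
set n2 := (n1 + k.-1 * n1.+1)%N.
set e := eC A k n1.
set u := uC A k n1.
have hs : symmetric e by exact: pe_sym.
have hi : irreflexive e by exact: pe_irr.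
have [[u' [hu' hc1]] _] := H1 n2 e hs hi.
have [_ hc2] := H2 n1 e hs hi.
have hc2' := hc2 u.
have Eu : forall x : 'I_n2, u' x = u x := @L14 A k n1 u' ltac:(lia) hu'.
have Ecost : cost A e u' n2 = cost A e u n2.
  rewrite /cost /St; congr #|A _ _ _|; apply/ffunP => x; by rewrite !ffunE Eu.
have hM1 : (M <= cost A e u n1)%N.
  have := @L8 A k n1 ltac:(lia) hv. by rewrite {1}/n1 addKn.
have hM2 : (cost A e u n1 <= cost A e u n2)%N.
  apply: (@L9 A k e u n1 n2 hv hs hi); rewrite /n2 leq_addr //.
set a0 := #|[set x : 'I_n1 | posC A k n1 x == 0%N]|.
have Eopt : OPT k n2 e = a0.
  move: hu' => /andP [_ /eqP <-].
  rewrite /a0 -(@L12 A k n1 n2); last by rewrite /n2 leq_addr.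
  apply: eq_card => x; rewrite !inE Eu //.
have hsum := @sumO A k n1 ltac:(lia).
fold a0 e in hsum.
set O := OPT k n1 e in hc2' hsum.
have R1 : (INR M <= r1 * INR a0 + a1).
  rewrite -Eopt; apply: Rle_trans hc1; rewrite Ecost; apply: le_INR; apply/leP; lia.
have R2 : (INR M <= w2 * INR O + a2).
  apply: Rle_trans hc2'; apply: le_INR; apply/leP; lia.
have R3 : (INR a0 + (INR k - 1) * INR O <= INR k + INR M).
  have : (a0 + k.-1 * O <= k + M)%coq_nat by apply/leP; rewrite -/n1; lia.
  move/le_INR; rewrite plus_INR mult_INR plus_INR.
  have -> : INR k.-1 = (INR k - 1).
    have -> : k = k.-1.+1 by lia. rewrite S_INR /=. lra.
  done.
have R4 : (5 <= INR k).
  have : (5 <= k)%coq_nat by apply/leP.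
  move/le_INR; by rewrite /=; lra.
have := @real_part _ _ _ _ _ _ _ _ _ R4 hp0 hp1 hr1 hw2 ha1 ha2 (pos_INR _) (pos_INR _) R1 R2 R3.
lra.
Qed.
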